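(* Let $(P,\omega)$ be a labeled poset of size $p$ and let $s\in P$. Then, as formal power series in $q$, $$G_{P,\omega;s}(q)=\frac{e_q^{\mathrm{maj}}(P,\omega;s)}{\prod_{i=1}^{p}(1-q^i)}.$$
   Context: $\mathbb{N}=\{0,1,2,\dots\}$; $\omega:P\to[p]$ is a bijection. A $(P,\omega)$-partition is a map $f:P\to\mathbb{N}$ with $f(x)\ge f(y)$ whenever $x\le y$, and $f(x)>f(y)$ whenever $x\le y$ and $\omega(x)>\omega(y)$. A $(P,\omega;s)$-partition is a $(P,\omega)$-partition $f$ with $f(s)\le f(t)$ for all $t\in P$ and such that $f(s)=f(t)$, $t\ne s$, implies $\omega(s)>\omega(t)$. $G_{P,\omega;s}(q)=\sum_{m\ge0}a(m)q^m$, where $a(m)$ is the number of $(P,\omega;s)$-partitions $f$ with $\sum_{t\in P}f(t)=m$. For a linear extension (order-preserving bijection) $g:P\to[p]$, its word is $\sigma=\omega\circ g^{-1}=\sigma_1\cdots\sigma_p$, and $\mathrm{maj}(\sigma)=\sum_{i:\sigma_i>\sigma_{i+1}}i$. $e_q^{\mathrm{maj}}(P,\omega;s)=\sum q^{\mathrm{maj}(\sigma)}$, summed over words $\sigma$ of linear extensions with $\sigma_p=\omega(s)$. *)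

(* Defs.v *)
From mathcomp Require Import all_boot all_order all_algebra.
Set Implicit Arguments. Unset Strict Implicit. Unset Printing Implicit Defensive.
Import GRing.Theory.

Definition is_poset (T : finType) (le : rel T) : Prop :=
  reflexive le /\ antisymmetric le /\ transitive le.

Definition is_labeling (T : finType) (omega : T -> nat) : Prop :=
  injective omega /\ forall x, 1 <= omega x <= #|T|.

Definition is_Pw_partition (T : finType) (le : rel T) (omega : T -> nat)
  (f : T -> nat) : bool :=
  [forall x, forall y, le x y ==> (f y <= f x)] &&
  [forall x, forall y, (le x y && (omega y < omega x)) ==> (f y < f x)].

Definition is_Pws_partition (T : finType) (le : rel T) (omega : T -> nat)
  (s : T) (f : T -> nat) : bool :=
  [&& is_Pw_partition le omega f,
      [forall t, f s <= f t] &
      [forall t, ((t != s) && (f s == f t)) ==> (omega t < omega s)]].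

(* a(m): number of (P,omega;s)-partitions f with sum m. Such f takes values
   in {0..m}, so we count maps T -> 'I_m.+1. *)
Definition a_coef (T : finType) (le : rel T) (omega : T -> nat) (s : T)
  (m : nat) : nat :=
  #|[set f : {ffun T -> 'I_m.+1} |
      is_Pws_partition le omega s (fun x => nat_of_ord (f x)) &&
      (\sum_(x : T) nat_of_ord (f x) == m)]|.

(* linear extension g : P -> [p] (positions 0..p-1 here, i.e. g(x)+1 in [p]) *)
Definition is_linext (T : finType) (le : rel T) (g : {ffun T -> 'I_#|T|}) : bool :=
  injectiveb g && [forall x, forall y, le x y ==> (g x <= g y)].

(* word sigma = omega o g^{-1} as the sequence sigma_1 ... sigma_p *)
Definition word (T : finType) (omega : T -> nat) (g : {ffun T -> 'I_#|T|}) : seq nat :=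
  mkseq (fun i => if [pick x | nat_of_ord (g x) == i] is Some x then omega x else 0)
        #|T|.

(* maj(sigma) = sum of i (1-based) with sigma_i > sigma_{i+1} *)
Definition maj (sigma : seq nat) : nat :=
  \sum_(1 <= i < size sigma | nth 0 sigma i < nth 0 sigma i.-1) i.

Definition emaj (T : finType) (le : rel T) (omega : T -> nat) (s : T) : {poly int} :=
  \sum_(g : {ffun T -> 'I_#|T|} |
          is_linext le g && (nth 0 (word omega g) #|T|.-1 == omega s))
     'X^(maj (word omega g)).

Definition denom (p : nat) : {poly int} := \prod_(1 <= i < p.+1) (1 - 'X^i).

(* Main.v *)
Require Import Defs.
From mathcomp Require Import all_boot all_order all_algebra zify.
From Stdlib Require Import FunctionalExtensionality.
Import GRing.Theory.
Set Implicit Arguments. Unset Strict Implicit. Unset Printing Implicit Defensive.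

Section AlgPart.
Local Open Scope ring_scope.
Definition eqmod (B : nat) (P Q : {poly int}) := forall i, (i < B)%N -> P`_i = Q`_i.

Lemma eqmod_refl B P : eqmod B P P. Proof. by []. Qed.
Lemma eqmod_sym B P Q : eqmod B P Q -> eqmod B Q P.
Proof. by move=> h i /h. Qed.
Lemma eqmod_trans B P Q R : eqmod B P Q -> eqmod B Q R -> eqmod B P R.
Proof. by move=> h1 h2 i hi; rewrite h1 // h2. Qed.
Lemma eqmod_le B B' P Q : (B <= B')%N -> eqmod B' P Q -> eqmod B P Q.
Proof. by move=> hb h i hi; apply: h; apply: leq_trans hb. Qed.
Lemma eqmodM B P P' Q Q' : eqmod B P P' -> eqmod B Q Q' -> eqmod B (P * Q) (P' * Q').
Proof.
move=> h1 h2 i hi; rewrite !coefM; apply: eq_bigr => j _.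
rewrite h1; last by apply: leq_ltn_trans hi; rewrite -ltnS.
by rewrite h2 // (leq_ltn_trans (leq_subr _ _) hi).
Qed.

Definition Qp (p B : nat) : {poly int} := \prod_(j < p) \sum_(c < B) 'X^((j.+1 * c)%N).

Lemma denomE p : denom p = \prod_(j < p) (1 - 'X^(j.+1)).
Proof. by rewrite /denom big_add1 /= big_mkord. Qed.

Lemma Qden p B : eqmod B (Qp p B * denom p) 1.
Proof.
rewrite /Qp denomE -big_split /=.
have -> : \prod_(i < p) ((\sum_(c < B) 'X^((i.+1 * c)%N)) * (1 - 'X^(i.+1)))
   = \prod_(i < p) (1 - 'X^((i.+1 * B)%N)) :> {poly int}.
  apply: eq_bigr => i _.
  have h := subrXX (1 : {poly int}) ('X^(i.+1)) B.
  rewrite expr1n -exprM in h; rewrite h mulrC; congr (_ * _).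
  by apply: eq_bigr => c _; rewrite expr1n mul1r -exprM.
elim/big_ind: _ => //.
  by move=> x y hx hy; rewrite -(mulr1 1); apply: eqmodM.
move=> i _ j hj; rewrite coefB coefXn coef1.
case: (j == (i.+1 * B)%N) /eqP => [e|]; last by rewrite subr0.
by exfalso; move: hj; rewrite e ltnNge leq_pmull.
Qed.

Lemma Q_indep p B B' : (B <= B')%N -> eqmod B (Qp p B) (Qp p B').
Proof.
move=> hb.
apply: (@eqmod_trans _ _ (Qp p B * (denom p * Qp p B'))).
  rewrite -{1}(mulr1 (Qp p B)); apply: eqmodM => //.
  apply: eqmod_sym; refine (eqmod_le hb _); rewrite mulrC; exact: Qden.
have -> : Qp p B * (denom p * Qp p B') = (Qp p B * denom p) * Qp p B'.
  by rewrite mulrA.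
rewrite -{2}(mul1r (Qp p B')); apply: eqmodM => //; exact: Qden.
Qed.

Definition wsum (p B : nat) (d : {ffun 'I_p -> 'I_B}) : nat := \sum_(j < p) j.+1 * d j.

Lemma QpE p B : Qp p B = \sum_(d : {ffun 'I_p -> 'I_B}) 'X^(wsum d).
Proof.
rewrite /Qp bigA_distr_bigA /=; apply: eq_bigr => d _.
by rewrite /wsum -prodrXr.
Qed.

End AlgPart.

Lemma sum_tri n (c : nat -> nat) :
  \sum_(0 <= i < n) \sum_(i <= j < n) c j = \sum_(0 <= j < n) j.+1 * c j.
Proof.
elim: n => [|n IH]; first by rewrite !big_geq.
rewrite big_nat_recr //= [in RHS]big_nat_recr //=.
rewrite [X in _ + X]big_nat1.
rewrite (@eq_big_nat _ _ _ 0 n _ (fun i => \sum_(i <= j < n) c j + c n)); last first.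
  by move=> i /andP[_ hi]; rewrite big_nat_recr //= ltnW.
rewrite big_split /= IH sum_nat_const_nat subn0. lia.
Qed.

Lemma sum_ltn p n : \sum_(0 <= i < p) (i < n) = minn p n.
Proof.
elim: p => [|p IH]; first by rewrite big_geq // min0n.
rewrite big_nat_recr //= IH; case: (ltnP p n) => h; lia.
Qed.

Section Comb.
Variable T : finType.
Variable le : rel T.
Variable omega : T -> nat.
Variable s : T.
Hypothesis Hpo : is_poset le.
Hypothesis Hlab : is_labeling omega.

Local Notation p := #|T|.
Local Notation gT := {ffun T -> 'I_#|T|}.

Lemma omega_inj : injective omega. Proof. by case: Hlab. Qed.

Lemma p_gt0 : 0 < p.
Proof. by apply/card_gt0P; exists s. Qed.

Definition el (g : gT) (j : nat) : T := odflt s [pick x | nat_of_ord (g x) == j].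

Lemma g_el (g : gT) j : injective g -> j < p -> nat_of_ord (g (el g j)) = j.
Proof.
move=> gi jp.
have := inj_card_onto gi (eq_leq (card_ord _)) (Ordinal jp).
case/codomP => x hx.
rewrite /el; case: pickP => [y /eqP //|/(_ x)].
by rewrite -hx eqxx.
Qed.

Lemma el_g (g : gT) x : injective g -> el g (g x) = x.
Proof.
move=> gi; apply: (gi); apply: val_inj => /=; by rewrite g_el.
Qed.

Lemma word_nth (g : gT) j : injective g -> j < p -> nth 0 (word omega g) j = omega (el g j).
Proof.
move=> gi jp; rewrite /word nth_mkseq // /el.
case: pickP => [y hy|] //= /(_ (el g j)).
by rewrite g_el // eqxx.
Qed.

Lemma sum_reindex (g : gT) (F : nat -> nat) : injective g ->
  \sum_(x : T) F (g x) = \sum_(0 <= i < p) F i.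
Proof.
move=> gi; rewrite big_mkord.
rewrite (reindex (fun i : 'I_p => el g i)) /=; last first.
  exists g => [i _|x _]; last by rewrite el_g.
  by apply: val_inj; rewrite /= g_el.
by apply: eq_bigr => i _; rewrite g_el.
Qed.

Lemma card_lt (g : gT) n : injective g -> n <= p -> #|[set y | g y < n]| = n.
Proof.
move=> gi np.
rewrite -sum1_card big_mkcond /=.
rewrite (eq_bigr (fun y => (fun i => nat_of_bool (i < n)) (nat_of_ord (g y)))); last first.
  by move=> y _; rewrite inE; case: (_ < _).
by rewrite (sum_reindex (fun i => nat_of_bool (i < n)) gi) sum_ltn; apply/minn_idPr.
Qed.

Definition desc (g : gT) (j : nat) : bool :=
  (j.+1 < p) && (nth 0 (word omega g) j.+1 < nth 0 (word omega g) j).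

Lemma majE (g : gT) : maj (word omega g) = \sum_(0 <= j < p) j.+1 * desc g j.
Proof.
rewrite /maj size_mkseq big_add1 /=.
have hp := p_gt0.
rewrite -{2}(prednK hp) big_nat_recr //=.
have -> : desc g #|T|.-1 = false by rewrite /desc prednK // ltnn.
rewrite muln0 addn0 big_mkcond /=.
apply: eq_big_nat => j /andP[_ hj].
rewrite /desc -(ltn_predRL) hj /=.
by case: (_ < _); rewrite ?muln1 ?muln0.
Qed.

Definition dn B (d : {ffun 'I_p -> 'I_B}) (j : nat) : nat :=
  oapp (fun i : 'I_p => nat_of_ord (d i)) 0 (insub j).

Lemma dnE B (d : {ffun 'I_p -> 'I_B}) (i : 'I_p) : dn d i = d i.
Proof. by rewrite /dn valK. Qed.

Lemma wsumE B (d : {ffun 'I_p -> 'I_B}) : wsum d = \sum_(0 <= j < p) j.+1 * dn d j.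
Proof. by rewrite /wsum big_mkord; apply: eq_bigr => i _; rewrite dnE. Qed.

Definition H B (g : gT) (d : {ffun 'I_p -> 'I_B}) (i : nat) : nat :=
  \sum_(i <= j < p) (dn d j + desc g j).

Lemma H_rec B g (d : {ffun 'I_p -> 'I_B}) i : i < p -> H g d i = dn d i + desc g i + H g d i.+1.
Proof. by move=> ip; rewrite /H big_ltn. Qed.

Lemma H_ge B g (d : {ffun 'I_p -> 'I_B}) i : p <= i -> H g d i = 0.
Proof. by move=> ip; rewrite /H big_geq. Qed.

Lemma H_anti B g (d : {ffun 'I_p -> 'I_B}) i i' : i <= i' -> H g d i' <= H g d i.
Proof.
move=> hi; case: (leqP i' p) => hp; last by rewrite H_ge // ltnW.
by rewrite /H (big_cat_nat hi hp) /= leq_addl.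
Qed.

Lemma H_eq B g (d : {ffun 'I_p -> 'I_B}) i i' : i <= i' -> i' < p -> H g d i = H g d i' ->
  nth 0 (word omega g) i <= nth 0 (word omega g) i'.
Proof.
move=> hi; rewrite -(subnKC hi); move: (i' - i) => n; elim: n i {hi} => [|n IH] i.
  by rewrite addn0.
move=> hp; rewrite addnS => e.
have ip : i < p by apply: leq_ltn_trans hp; lia.
have h1 : H g d (i + n).+1 <= H g d i.+1 by apply: H_anti; lia.
move: e; rewrite (H_rec _ _ ip) => e.
have hd : desc g i = false by move: e h1; case: (desc g i); lia.
have e2 : H g d i.+1 = H g d (i + n).+1 by lia.
have hp' : (i + n).+1 < p by rewrite -addnS.
have := IH i.+1; rewrite addSn => /(_ hp' e2).
apply: leq_trans.
move: hd; rewrite /desc.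
have -> : i.+1 < p by lia.
by rewrite /= => /negbT; rewrite -leqNgt.
Qed.

Lemma sumH B (g : gT) (d : {ffun 'I_p -> 'I_B}) : injective g ->
  \sum_(x : T) H g d (g x) = maj (word omega g) + wsum d.
Proof.
move=> gi; rewrite (sum_reindex (fun i => H g d i) gi) /H sum_tri.
by rewrite majE wsumE -big_split /=; apply: eq_bigr => j _; rewrite mulnDr addnC.
Qed.

Lemma H_bound B (g : gT) (d : {ffun 'I_p -> 'I_B}) i :
  H g d i <= maj (word omega g) + wsum d.
Proof.
apply: (leq_trans (H_anti g d (leq0n i))).
rewrite majE wsumE -big_split /= /H; apply: leq_sum => j _.
by rewrite addnC -mulnDr leq_pmull.
Qed.

Definition valid (g : gT) :=
  is_linext le g && (nth 0 (word omega g) #|T|.-1 == omega s).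

Lemma valid_inj (g : gT) : valid g -> injective g.
Proof. by case/andP => /andP[/injectiveP]. Qed.

Lemma valid_le (g : gT) x y : valid g -> le x y -> g x <= g y.
Proof. by case/andP => /andP[_ /forallP /(_ x) /forallP /(_ y) /implyP]. Qed.

Lemma w_g (g : gT) x : injective g -> nth 0 (word omega g) (g x) = omega x.
Proof. by move=> gi; rewrite word_nth // el_g. Qed.

Lemma valid_s (g : gT) : valid g -> nat_of_ord (g s) = p.-1.
Proof.
move=> v; have gi := valid_inj v.
have hp : p.-1 < p by rewrite prednK ?p_gt0.
case/andP: v => _ /eqP; rewrite word_nth // => /omega_inj <-.
by rewrite g_el.
Qed.

Definition keylt (F : T -> nat) x y :=
  (F y < F x) || ((F x == F y) && (omega x < omega y)).

Lemma keylt_irr F x : keylt F x x = false.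
Proof. by rewrite /keylt ltnn eqxx ltnn. Qed.

Lemma keylt_asym F x y : keylt F x y -> keylt F y x = false.
Proof.
rewrite /keylt => k; apply/negP => k'; move: k k'.
case: (ltngtP (F y) (F x)) => h /=; try lia.
Qed.

Lemma keylt_trans F x y z : keylt F x y -> keylt F y z -> keylt F x z.
Proof.
rewrite /keylt => /orP[h1|/andP[/eqP e1 h1]] /orP[h2|/andP[/eqP e2 h2]]; apply/orP.
- by left; apply: ltn_trans h1.
- by left; rewrite -e2.
- by left; rewrite e1.
- by right; rewrite e1 e2 eqxx /=; apply: ltn_trans h2.
Qed.

Lemma keylt_total F x y : x != y -> keylt F x y || keylt F y x.
Proof.
move=> nxy; rewrite /keylt.
have : omega x != omega y by apply: contra nxy => /eqP /omega_inj ->.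
lia.
Qed.

Section Phi.
Variable B : nat.
Variable g : gT.
Variable d : {ffun 'I_p -> 'I_B}.
Hypothesis vg : valid g.

Local Notation F := (fun x => H g d (g x)).

Lemma key_of_g x y : g x < g y -> keylt F x y.
Proof.
move=> lt; have gi := valid_inj vg; rewrite /keylt.
have hle : H g d (g y) <= H g d (g x) by apply: H_anti; apply: ltnW.
rewrite leq_eqVlt in hle; case/orP: hle => [/eqP e|->] //.
rewrite e eqxx /=.
have := H_eq (ltnW lt) (ltn_ord _) (esym e); rewrite !w_g //.
rewrite leq_eqVlt => /orP[/eqP /omega_inj exy|] //.
  by move: lt; rewrite exy ltnn.
by move=> ->; rewrite orbT.
Qed.

Lemma g_of_key x y : keylt F x y -> g x < g y.
Proof.
move=> k; have gi := valid_inj vg.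
case: (ltngtP (g x) (g y)) => // [h|h].
  by move: (key_of_g h); rewrite (keylt_asym k).
have exy : x = y by apply: gi; apply: val_inj.
by move: k; rewrite exy keylt_irr.
Qed.

Lemma g_rank x : nat_of_ord (g x) = #|[set y | keylt F y x]|.
Proof.
have gi := valid_inj vg.
rewrite -{1}(card_lt gi (ltnW (ltn_ord (g x)))).
apply: eq_card => y; rewrite !inE.
by apply/idP/idP => [/key_of_g|/g_of_key].
Qed.

Lemma Phi_Pws : is_Pws_partition le omega s F.
Proof.
have gi := valid_inj vg.
have gsx : forall x, g x <= g s.
  by move=> x; rewrite valid_s // -ltnS prednK ?p_gt0.
apply/and3P; split; first (apply/andP; split).
- apply/forallP => x; apply/forallP => y; apply/implyP => /= hxy.
  by apply: H_anti; apply: valid_le.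
- apply/forallP => x; apply/forallP => y; apply/implyP => /= /andP[hxy hw].
  have gle := valid_le vg hxy.
  rewrite ltn_neqAle H_anti // andbT; apply/negP => /eqP e.
  have := H_eq gle (ltn_ord _) (esym e); rewrite !w_g //.
  by rewrite leqNgt hw.
- by apply/forallP => x /=; apply: H_anti.
- apply/forallP => x; apply/implyP => /= /andP[nxs /eqP e].
  have := H_eq (gsx x) (ltn_ord _) (esym e); rewrite !w_g //.
  rewrite leq_eqVlt => /orP[/eqP /omega_inj exs|] //.
  by move: nxs; rewrite exs eqxx.
Qed.

End Phi.

Section Main.
Variable k : nat.
Local Notation dT := {ffun 'I_#|T| -> 'I_k.+1}.

Definition Phi (gd : gT * dT) : {ffun T -> 'I_k.+1} :=
  [ffun x => inord (H gd.1 gd.2 (gd.1 x))].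

Definition Aset := [set gd : gT * dT | valid gd.1 && (maj (word omega gd.1) + wsum gd.2 == k)].
Definition Sset := [set f : {ffun T -> 'I_k.+1} |
  is_Pws_partition le omega s (fun x => nat_of_ord (f x)) && (\sum_(x : T) nat_of_ord (f x) == k)].

Lemma a_coefE : a_coef le omega s k = #|Sset|.
Proof. by []. Qed.

Lemma Phi_val gd x : gd \in Aset -> nat_of_ord (Phi gd x) = H gd.1 gd.2 (gd.1 x).
Proof.
rewrite inE => /andP[_ /eqP e].
have hb := H_bound gd.1 gd.2 (gd.1 x); rewrite e in hb.
by rewrite ffunE inordK.
Qed.

Lemma Phi_fun gd : gd \in Aset -> (fun x => nat_of_ord (Phi gd x)) = (fun x => H gd.1 gd.2 (gd.1 x)).
Proof. by move=> h; apply: functional_extensionality => x; rewrite Phi_val. Qed.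

Lemma Phi_in gd : gd \in Aset -> Phi gd \in Sset.
Proof.
move=> h; rewrite inE Phi_fun //.
rewrite (eq_bigr (fun x => H gd.1 gd.2 (gd.1 x))); last by move=> x _; rewrite Phi_val.
move: h; rewrite inE => /andP[v /eqP e].
rewrite Phi_Pws //= sumH; [by rewrite e | exact: valid_inj].
Qed.

Lemma Phi_inj : {in Aset &, injective Phi}.
Proof.
move=> [g d] [g' d'] hA hA' e.
have fe := Phi_fun hA; rewrite e Phi_fun // in fe; simpl in fe.
move: (hA) (hA'); rewrite !inE /= => /andP[v _] /andP[v' _].
have eg : g = g'.
  apply/ffunP => x; apply: val_inj.
  by rewrite /= (g_rank d v) (g_rank d' v') fe.
subst g'.
have gi := valid_inj v.
have eH : forall j, H g d j = H g d' j.
  move=> j; case: (ltnP j p) => jp; last by rewrite !H_ge.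
  have := congr1 (fun F => F (el g j)) fe; simpl.
  by rewrite g_el.
congr pair; apply/ffunP => i; apply: val_inj.
rewrite /= -!dnE.
have := eH i; rewrite !(H_rec _ _ (ltn_ord i)) (eH i.+1).
by move/eqP; rewrite !eqn_add2r => /eqP.
Qed.

Section Onto.
Variable f : {ffun T -> 'I_k.+1}.
Hypothesis fS : f \in Sset.
Local Notation F := (fun x => nat_of_ord (f x)).

Lemma fPws : is_Pws_partition le omega s F.
Proof. by move: fS; rewrite inE => /andP[]. Qed.

Lemma fsum : \sum_(x : T) F x = k.
Proof. by move: fS; rewrite inE => /andP[_ /eqP]. Qed.

Definition rank x := #|[set y | keylt F y x]|.

Lemma rank_lt x : rank x < p.
Proof.
have h : rank x <= #|[set~ x]|.
  apply: subset_leq_card; apply/subsetP => y; rewrite !inE.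
  by apply: contraTneq => ->; rewrite keylt_irr.
by apply: (leq_ltn_trans h); rewrite cardsC1 prednK // p_gt0.
Qed.

Definition gf : gT := [ffun x => Ordinal (rank_lt x)].

Lemma gfE x : nat_of_ord (gf x) = rank x.
Proof. by rewrite ffunE. Qed.

Lemma R1 x y : keylt F x y -> rank x < rank y.
Proof.
move=> kxy; apply: proper_card; apply/properP; split.
  by apply/subsetP => z; rewrite !inE => h; apply: keylt_trans kxy.
by exists x; rewrite !inE ?keylt_irr.
Qed.

Lemma R3 x y : rank x < rank y -> keylt F x y.
Proof.
move=> h; case: (eqVneq x y) => [exy|nxy].
  by move: h; rewrite exy ltnn.
case/orP: (keylt_total F nxy) => // /R1 h'.
by move: (ltn_trans h h'); rewrite ltnn.
Qed.

Lemma gf_inj : injective gf.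
Proof.
move=> x y e; apply/eqP; apply/negP => /negP nxy.
have e' : rank x = rank y by rewrite -!gfE e.
by case/orP: (keylt_total F nxy) => /R1; rewrite e' ltnn.
Qed.

Lemma Pw1 x y : le x y -> F y <= F x.
Proof.
by case/and3P: fPws => /andP[/forallP /(_ x) /forallP /(_ y) /implyP h _] _ _.
Qed.

Lemma Pw2 x y : le x y -> omega y < omega x -> F y < F x.
Proof.
case/and3P: fPws => /andP[_ /forallP /(_ x) /forallP /(_ y) /implyP h] _ _ a b.
by apply: h; rewrite a b.
Qed.

Lemma Pws2 t : F s <= F t.
Proof. by case/and3P: fPws => _ /forallP /(_ t) h _. Qed.

Lemma Pws3 t : t != s -> F s = F t -> omega t < omega s.
Proof.
case/and3P: fPws => _ _ /forallP /(_ t) /implyP h a b.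
by apply: h; rewrite a b eqxx.
Qed.

Lemma gf_valid : valid gf.
Proof.
have gi := gf_inj.
apply/andP; split.
  apply/andP; split; first by apply/injectiveP.
  apply/forallP => x; apply/forallP => y; apply/implyP => hxy.
  rewrite !gfE; case: (eqVneq x y) => [->//|nxy].
  apply: ltnW; apply: R1; rewrite /keylt.
  have h1 := Pw1 hxy.
  have hw : omega x != omega y by apply: contra nxy => /eqP /omega_inj ->.
  case: (ltngtP (omega x) (omega y)) => hxy'.
  - lia.
  - have := Pw2 hxy hxy'; lia.
  - by move: hw; rewrite hxy' eqxx.
have rs : rank s = p.-1.
  rewrite /rank -(cardsC1 s); apply: eq_card => y; rewrite !inE.
  case: (eqVneq y s) => [->|nys]; first by rewrite keylt_irr.
  rewrite /keylt; have := Pws2 y; have := Pws3 nys; lia.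
have hp : p.-1 < p by rewrite prednK ?p_gt0.
rewrite word_nth //.
have -> : el gf p.-1 = s by rewrite -rs -gfE el_g.
by [].
Qed.

Definition h (i : nat) : nat := if i < p then F (el gf i) else 0.

Lemma F_le x : F x <= k.
Proof.
have := fsum; rewrite (bigD1 x) //= => e.
by apply: leq_trans (leq_addr _ _) (eq_leq e).
Qed.

Lemma h_le i : h i <= k.
Proof. by rewrite /h; case: (_ < _) => //; apply: F_le. Qed.

Lemma h_step i : i < p -> h i.+1 + desc gf i <= h i.
Proof.
move=> ip; rewrite /desc /h ip.
case: (ltnP i.+1 p) => ip1 /=; last by rewrite addn0.
rewrite !word_nth //; try exact: gf_inj.
have : keylt F (el gf i) (el gf i.+1).
  by apply: R3; rewrite -!gfE !g_el //; exact: gf_inj.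
rewrite /keylt; lia.
Qed.

Definition df : {ffun 'I_p -> 'I_k.+1} := [ffun i : 'I_p => inord (h i - h i.+1 - desc gf i)].

Lemma dn_df j : j < p -> dn df j = h j - h j.+1 - desc gf j.
Proof.
move=> jp; rewrite /dn; case: insubP => [i _ ei|]; last by rewrite jp.
rewrite /= ffunE inordK ei //.
by rewrite ltnS (leq_trans _ (h_le j)) // -subnDA leq_subr.
Qed.

Lemma H_df i : i <= p -> H gf df i = h i.
Proof.
move=> ip; have [n en] : exists n, p = n + i by exists (p - i); rewrite subnK.
elim: n i en {ip} => [|n IH] i en.
  by rewrite H_ge /h en add0n ?ltnn.
have lp : i < p by lia.
rewrite H_rec // IH; last by lia.
rewrite dn_df //.
have := h_step lp; lia.
Qed.

Lemma Phi_gf : Phi (gf, df) = f.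
Proof.
apply/ffunP => x; apply: val_inj.
rewrite ffunE /= H_df; last by apply: ltnW.
by rewrite /h ltn_ord el_g ?inord_val //; apply: gf_inj.
Qed.

Lemma gfdf_in : (gf, df) \in Aset.
Proof.
rewrite inE /= gf_valid /= -sumH; last by apply: gf_inj.
apply/eqP; rewrite -[X in _ = X]fsum; apply: eq_bigr => x _.
rewrite H_df; last by apply: ltnW.
by rewrite /h ltn_ord el_g //; apply: gf_inj.
Qed.

End Onto.

Lemma card_main : #|Sset| = #|Aset|.
Proof.
rewrite -(card_in_imset Phi_inj); apply: eq_card => f.
apply/idP/imsetP => [fS|[gd hA ->]]; last by apply: Phi_in.
by exists (gf f, df f); [apply: gfdf_in | rewrite Phi_gf].
Qed.

Lemma a_coef_sum : a_coef le omega s k =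
  (\sum_(g | valid g) #|[set d : dT | maj (word omega g) + wsum d == k]|)%N.
Proof.
rewrite a_coefE card_main -sum1_card.
rewrite (eq_bigl (fun gd : gT * dT => valid gd.1 && (maj (word omega gd.1) + wsum gd.2 == k))); last first.
  by move=> gd; rewrite inE.
rewrite -(pair_big_dep (fun g => valid g) (fun g d => maj (word omega g) + wsum d == k) (fun _ _ => 1)) /=.
apply: eq_bigr => g _; rewrite -[#|[set d | _]|]sum1_card.
by apply: eq_bigl => d; rewrite inE.
Qed.

End Main.

End Comb.

Section AsmPart.
Local Open Scope ring_scope.
Lemma coef_EQ (T : finType) (le : rel T) (omega : T -> nat) (s : T) B k :
  (emaj le omega s * Qp #|T| B)`_k =
  ((\sum_(g | valid le omega s g)
      #|[set d : {ffun 'I_#|T| -> 'I_B} | maj (word omega g) + wsum d == k]|)%N)%:R.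
Proof.
rewrite /emaj QpE big_distrl /= coef_sum.
rewrite [RHS]natr_sum; apply: eq_bigr => g _.
rewrite big_distrr /= coef_sum.
set A := [set d | _].
rewrite -(sum1_card (mem A)) [RHS]natr_sum.
rewrite (bigID (fun d => d \in A)) /=.
rewrite [X in _ + X]big1 ?addr0; last first.
  by move=> d; rewrite inE -exprD coefXn eq_sym => /negbTE ->.
by apply: eq_bigr => d; rewrite inE -exprD coefXn eq_sym => ->.
Qed.

Lemma assemble (T : finType) (le : rel T) (omega : T -> nat) (s : T) :
  (forall k, a_coef le omega s k =
     (\sum_(g | valid le omega s g)
      #|[set d : {ffun 'I_#|T| -> 'I_k.+1} | maj (word omega g) + wsum d == k]|)%N) ->
  forall m : nat,
    \sum_(k < m.+1) ((a_coef le omega s k)%:R * (denom #|T|)`_(m - k)%N)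
      = (emaj le omega s)`_m.
Proof.
move=> hk m.
set E := emaj le omega s.
have h1 : forall k : 'I_m.+1, (a_coef le omega s k)%:R = (E * Qp #|T| m.+1)`_k.
  move=> k; rewrite hk -coef_EQ.
  have := eqmodM (@eqmod_refl k.+1 E) (@Q_indep #|T| _ _ (ltn_ord k)).
  by move/(_ k (ltnSn k)).
rewrite (eq_bigr (fun k : 'I_m.+1 => (E * Qp #|T| m.+1)`_k * (denom #|T|)`_(m - k))); last first.
  by move=> k _; rewrite h1.
rewrite -coefM -mulrA.
have := eqmodM (@eqmod_refl m.+1 E) (@Qden #|T| m.+1).
by rewrite mulr1 => /(_ m (ltnSn m)).
Qed.

End AsmPart.

Local Open Scope ring_scope.

Theorem theorem3p3 (T : finType) (le : rel T) (omega : T -> nat) (s : T) :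
  is_poset le -> is_labeling omega ->
  forall m : nat,
    \sum_(k < m.+1) ((a_coef le omega s k)%:R * (denom #|T|)`_(m - k)%N)
      = (emaj le omega s)`_m.
Proof.
move=> Hpo Hlab; apply: assemble => k.
exact: (a_coef_sum le s Hlab k).
Qed.
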